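(* Let $p$ be a positive integer, let $1 \le r_1 \le \dots \le r_p$ be integers with $r_d \mid r_{d+1}$ for $d=1,\dots,p-1$, and let $\alpha \ge r_p$ be an integer. Then the edge-coloring $\psi_p$ of the complete graph on vertex set $\{0,1\}^\alpha$ defined below contains no striped $K_4$.
   Context: Set $r_0 = 1$ and $r_{p+1} = \alpha$. For $0 \le d \le p$ and a binary string $x$ of any length, write $x = (x^{(d)}_1, \dots, x^{(d)}_{m})$ for its decomposition into consecutive blocks, each of length $r_d$ except the last, which has length between $1$ and $r_d$. Define $\eta_d(x,y) = 0$ if $x=y$ and otherwise $\eta_d(x,y) = (i,\{x^{(d)}_i,y^{(d)}_i\})$ with $i$ the least index where $x^{(d)}_i \ne y^{(d)}_i$. For $x,y \in\{0,1\}^\alpha$ and $0\le d\le p$, decomposing $x,y$ into blocks of length $r_{d+1}$, $x=(x^{(d+1)}_1,\dots,x^{(d+1)}_{m'})$, set $\xi_d(x,y) = (\eta_d(x^{(d+1)}_1,y^{(d+1)}_1),\dots,\eta_d(x^{(d+1)}_{m'},y^{(d+1)}_{m'}))$ and $c_p(x,y) = (\xi_p(x,y),\dots,\xi_0(x,y))$. Order binary strings of each fixed length lexicographically. For $x<y$ in $\{0,1\}^\alpha$, with $x = (x^{(p)}_1,\dots,x^{(p)}_{a+1})$ the decomposition into blocks of length $r_p$, let $\delta_{p,i}(x,y) = +1$ if $x^{(p)}_i \le y^{(p)}_i$ and $-1$ if $x^{(p)}_i > y^{(p)}_i$, and $\Delta_p(x,y) = (\delta_{p,1}(x,y),\dots,\delta_{p,a+1}(x,y))$.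 Then $\psi_p$ assigns to the edge $\{x,y\}$, $x<y$, the color $(c_p(x,y), \Delta_p(x,y))$. A striped $K_4$ under an edge-coloring $f$ is a set of four vertices $\{a,b,c,e\}$ with $f(ab)=f(ce)$, $f(ac)=f(be)$, $f(ae)=f(bc)$, and $f(ab)$, $f(ac)$, $f(ae)$ pairwise distinct. *)

(* Defs.v *)
From HB Require Import structures.
From mathcomp Require Import all_boot.
From mathcomp Require Import finmap.
Set Implicit Arguments. Unset Strict Implicit. Unset Printing Implicit Defensive.

Local Open Scope fset_scope.

(* Binary strings are [seq bool] (false = 0, true = 1). *)

Fixpoint lexle (s t : seq bool) : bool :=
  match s, t with
  | [::], _ => true
  | _ :: _, [::] => false
  | a :: s', b :: t' => (~~ a && b) || ((a == b) && lexle s' t')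
  end.
Definition lexlt (s t : seq bool) : bool := lexle s t && (s != t).

(* Decomposition of s into consecutive blocks of length k (k >= 1), the last
   one of length between 1 and k. *)
Definition blocks (k : nat) (s : seq bool) : seq (seq bool) :=
  [seq take k (drop (k * i) s) | i <- iota 0 ((size s + k.-1) %/ k)].

Definition rseq (p alpha : nat) (r : nat -> nat) (d : nat) : nat :=
  if d == 0 then 1 else if d == p.+1 then alpha else r d.

(* eta_d : None encodes the value 0; Some (i, {x_i, y_i}) with i 1-based. *)
Definition eta_col := option (nat * {fset (seq bool)}).

Definition eta (k : nat) (x y : seq bool) : eta_col :=
  if x == y then None
  else
    let bx := blocks k x in
    let by_ := blocks k y in
    let i := find (fun uv : seq bool * seq bool => uv.1 != uv.2) (zip bx by_) in
    Some (i.+1, [fset nth [::] bx i; nth [::] by_ i]).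

Definition xi (p alpha : nat) (r : nat -> nat) (d : nat) (x y : seq bool)
  : seq eta_col :=
  [seq eta (rseq p alpha r d) uv.1 uv.2
  | uv <- zip (blocks (rseq p alpha r d.+1) x) (blocks (rseq p alpha r d.+1) y)].

Definition cp (p alpha : nat) (r : nat -> nat) (x y : seq bool) : seq (seq eta_col) :=
  [seq xi p alpha r d x y | d <- rev (iota 0 p.+1)].

(* Delta_p; the sign +1 is encoded by true and -1 by false. *)
Definition Deltap (p alpha : nat) (r : nat -> nat) (x y : seq bool) : seq bool :=
  [seq lexle uv.1 uv.2
  | uv <- zip (blocks (rseq p alpha r p) x) (blocks (rseq p alpha r p) y)].

Definition psi_col := (seq (seq eta_col) * seq bool)%type.

Definition psi_ord (p alpha : nat) (r : nat -> nat) (x y : seq bool) : psi_col :=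
  (cp p alpha r x y, Deltap p alpha r x y).

Definition psi (p alpha : nat) (r : nat -> nat) (x y : alpha.-tuple bool) : psi_col :=
  if lexlt x y then psi_ord p alpha r x y else psi_ord p alpha r y x.

Definition striped_K4 (T : eqType) (C : eqType) (f : T -> T -> C) (a b c e : T) : Prop :=
  [/\ uniq [:: a; b; c; e],
      f a b = f c e, f a c = f b e, f a e = f b c &
      [/\ f a b != f a c, f a b != f a e & f a c != f a e]].

(* Main.v *)
Require Import Defs.
From mathcomp Require Import all_boot.
From mathcomp Require Import finmap.
From mathcomp Require Import zify.
Set Implicit Arguments. Unset Strict Implicit. Unset Printing Implicit Defensive.

Lemma lexle_refl s : lexle s s.
Proof. by elim: s => //= x s ->; rewrite eqxx orbT. Qed.

Lemma lexle_anti s t : lexle s t -> lexle t s -> s = t.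
Proof.
elim: s t => [|x s IH] [|y t] //=.
by case: x; case: y => //= H1 H2; rewrite (IH t H1 H2).
Qed.

Lemma lexle_total s t : lexle s t || lexle t s.
Proof.
elim: s t => [|x s IH] [|y t] //=.
by case: x; case: y => //=; apply: IH.
Qed.

Lemma lexle_trans s t u : lexle s t -> lexle t u -> lexle s u.
Proof.
elim: s t u => [|x s IH] [|y t] [|z u] //=.
by case: x; case: y; case: z => //= ; apply: IH.
Qed.

Lemma lexle_sym_false s t : s != t -> lexle s t = lexle t s -> False.
Proof.
move=> nst H; have := lexle_total s t; rewrite -H orbb => H1.
by move: nst; rewrite (lexle_anti H1) ?eqxx // -H.
Qed.

Lemma lexlt_total s t : s != t -> lexlt s t || lexlt t s.
Proof.
move=> nst; rewrite /lexlt nst eq_sym nst !andbT; exact: lexle_total.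
Qed.

Lemma lexlt_asym s t : lexlt s t -> lexlt t s -> False.
Proof.
rewrite /lexlt => /andP [H1 H2] /andP [H3 _].
by move: H2; rewrite (lexle_anti H1 H3) eqxx.
Qed.

Lemma nocycle s t u : lexlt s t -> lexlt t u -> lexlt u s -> False.
Proof.
move=> H1 H2 H3; move: (H1) (H2) (H3) => /andP [l1 _] /andP [l2 _] /andP [l3 _].
have E := lexle_anti (lexle_trans l1 l2) l3; subst u.
exact: (lexlt_asym H1 H2).
Qed.

Lemma psiC p alpha r (x y : alpha.-tuple bool) : psi p r x y = psi p r y x.
Proof.
rewrite /psi; case: (eqVneq (tval x) (tval y)) => [E|N].
  by have -> : x = y by apply: val_inj.
case: (boolP (lexlt x y)) => H.
  by case: (boolP (lexlt y x)) => // H'; case: (lexlt_asym H H').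
have := lexlt_total N; rewrite (negbTE H) /= => ->; done.
Qed.

Lemma size_blocks k s : size (blocks k s) = (size s + k.-1) %/ k.
Proof. by rewrite /blocks size_map size_iota. Qed.

Lemma flatten_blocks_gen k (s : seq bool) n m : 0 < k -> size s <= k * (m + n) ->
  flatten [seq take k (drop (k * i) s) | i <- iota m n] = drop (k * m) s.
Proof.
move=> hk; elim: n m => [|n IH] m.
  by rewrite addn0 /= => hs; rewrite drop_oversize.
move=> hs /=; rewrite IH; last by rewrite addSnnS.
by rewrite mulnS -drop_drop cat_take_drop.
Qed.

Lemma flatten_blocks k (s : seq bool) : 0 < k -> flatten (blocks k s) = s.
Proof.
move=> hk; rewrite /blocks flatten_blocks_gen ?muln0 ?drop0 //.
rewrite add0n.
have := leq_trunc_div (size s + k.-1) k.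
have := ltn_pmod (size s + k.-1) hk.
have := divn_eq (size s + k.-1) k.
lia.
Qed.

Lemma has_neq k (s t : seq bool) : 0 < k -> size s = size t -> s != t ->
  has (fun uv : seq bool * seq bool => uv.1 != uv.2) (zip (blocks k s) (blocks k t)).
Proof.
move=> hk hst nst; case: (boolP (has _ _)) => // /hasPn H; exfalso; move/eqP: nst; apply.
rewrite -(flatten_blocks s hk) -(flatten_blocks t hk); congr flatten.
apply: (eq_from_nth (x0 := [::])); first by rewrite !size_blocks hst.
move=> i hi.
have hi' : i < size (zip (blocks k s) (blocks k t)).
  by rewrite size_zip !size_blocks hst minnn -hst -size_blocks.
have := H _ (mem_nth ([::], [::]) hi').
by rewrite nth_zip ?size_blocks ?hst //= negbK => /eqP.
Qed.

Section Core.
Variables (p alpha : nat) (r : nat -> nat).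
Hypothesis hp : 0 < p.
Hypothesis hrp : 0 < r p.
Hypothesis hal : 0 < alpha.

Lemma rseq_p : rseq p alpha r p = r p.
Proof.
rewrite /rseq; have -> : (p == 0) = false by case: p hp.
by rewrite eqn_leq ltnn andbF.
Qed.

Lemma xi_top (x y : seq bool) : size x = alpha -> size y = alpha ->
  xi p alpha r p x y = [:: eta (rseq p alpha r p) x y].
Proof.
move=> hx hy.
have hb : forall z : seq bool, size z = alpha -> blocks alpha z = [:: z].
  move=> z hz; rewrite /blocks hz.
  have -> : (alpha + alpha.-1) %/ alpha = 1.
    rewrite -{1}(mul1n alpha) divnMDl // divn_small ?addn0 //.
    by rewrite ltn_predL.
  by rewrite /= muln0 drop0 take_oversize // hz.
rewrite /xi; have -> : rseq p alpha r p.+1 = alpha by rewrite /rseq eqxx.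
by rewrite !hb.
Qed.

Lemma cp_top (x y z w : seq bool) : cp p alpha r x y = cp p alpha r z w ->
  xi p alpha r p x y = xi p alpha r p z w.
Proof.
rewrite /cp.
have -> : rev (iota 0 p.+1) = p :: rev (iota 0 p).
  by rewrite -addn1 iotaD rev_cat add0n.
by case.
Qed.

Lemma nth_Delta (x y : seq bool) i : size x = size y ->
  i < size (blocks (rseq p alpha r p) x) ->
  nth true (Deltap p alpha r x y) i =
  lexle (nth [::] (blocks (rseq p alpha r p) x) i) (nth [::] (blocks (rseq p alpha r p) y) i).
Proof.
move=> hxy hi; rewrite /Deltap (nth_map ([::], [::])).
  by rewrite nth_zip // !size_blocks hxy.
by rewrite size_zip !size_blocks hxy minnn -hxy -size_blocks.
Qed.

Lemma core (a b c e : alpha.-tuple bool) :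
  lexlt a b -> lexlt a c -> lexlt a e -> lexlt b c -> lexlt b e -> lexlt c e ->
  psi p r a b = psi p r c e -> psi p r a c = psi p r b e -> psi p r a e = psi p r b c ->
  False.
Proof.
move=> hab hac hae hbc hbe hce.
rewrite /psi hab hac hae hbc hbe hce /psi_ord.
case=> /cp_top E1 _ [_ E2] [_ E3].
rewrite !xi_top ?size_tuple // in E1.
case: E1; rewrite /eta.
move: (hab) (hce) => /andP [_ nab] /andP [_ nce].
rewrite (negbTE nab) (negbTE nce).
set k := rseq p alpha r p.
have hk : 0 < k by rewrite /k rseq_p.
have szB : forall x : alpha.-tuple bool, size (blocks k x) = (alpha + k.-1) %/ k.
  by move=> x; rewrite size_blocks size_tuple.
have hasab := has_neq hk (etrans (size_tuple a) (esym (size_tuple b))) nab.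
set i := find _ (zip (blocks k a) (blocks k b)).
set i' := find _ (zip (blocks k c) (blocks k e)).
move=> [Ei Ef].
have hi : i < size (zip (blocks k a) (blocks k b)) by rewrite -has_find.
have hiB : forall x : alpha.-tuple bool, i < size (blocks k x).
  by move=> x; move: hi; rewrite size_zip !szB minnn.
have nAB := nth_find ([::], [::]) hasab.
rewrite -/i nth_zip ?szB //= in nAB.
rewrite -Ei in Ef.
set A := nth [::] (blocks k a) i in Ef nAB.
set B := nth [::] (blocks k b) i in Ef nAB.
set C := nth [::] (blocks k c) i in Ef.
set D := nth [::] (blocks k e) i in Ef.
have hA : A \in [fset C; D]%fset by rewrite -Ef !inE eqxx.
have hB : B \in [fset C; D]%fset by rewrite -Ef !inE eqxx orbT.
have d3 := congr1 (fun s => nth true s i) E3.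
have d2 := congr1 (fun s => nth true s i) E2.
rewrite /= !nth_Delta ?hiB ?size_tuple // -/k -/A -/B -/C -/D in d2 d3.
move: hA hB; rewrite !inE => /orP [] /eqP hA /orP [] /eqP hB.
- by move: nAB; rewrite hA hB eqxx.
- by move: nAB d3; rewrite hA hB; apply: lexle_sym_false.
- by move: nAB d2; rewrite hA hB; apply: lexle_sym_false.
- by move: nAB; rewrite hA hB eqxx.
Qed.

End Core.

Ltac eqs := match goal with |- psi ?p ?r ?x ?y = psi _ _ ?z ?w =>
  first [assumption | symmetry; assumption
        | rewrite (psiC p r x y); first [assumption | symmetry; assumption
             | rewrite (psiC p r z w); first [assumption | symmetry; assumption]]
        | rewrite (psiC p r z w); first [assumption | symmetry; assumption]] end.

Ltac nocyc := match goal with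
  H1 : is_true (lexlt ?x ?y), H2 : is_true (lexlt ?y ?z), H3 : is_true (lexlt ?z ?x) |- _ =>
  exact: (nocycle H1 H2 H3) end.

Theorem lemma2p3 (p : nat) (r : nat -> nat) (alpha : nat) :
  0 < p ->
  1 <= r 1 ->
  (forall d, 1 <= d < p -> r d <= r d.+1) ->
  (forall d, 1 <= d < p -> r d %| r d.+1) ->
  r p <= alpha ->
  ~ (exists a b c e : alpha.-tuple bool, striped_K4 (psi p r) a b c e).
Proof.
move=> hp hr1 hmono _ hpal [a [b [c [e [hu E1 E2 E3 _]]]]].
have hpos : forall d, 0 < d <= p -> 0 < r d.
  elim=> [//|d IH] /andP [_ hd]; case: d IH hd => [|d] IH hd; first done.
  apply: (leq_trans (IH _)); first by apply/andP; split => //; apply: ltnW.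
  by apply: hmono; apply/andP; split => //; apply: ltnW.
have hrp : 0 < r p by apply: hpos; rewrite hp leqnn.
have hal : 0 < alpha by apply: leq_trans hrp hpal.
move: hu; rewrite /= !inE -!val_eqE !negb_or.
move=> /andP [/and3P [nab nac nae] /andP [/andP [nbc nbe] /andP [nce _]]].
have [ab|ba] := orP (lexlt_total nab);
have [ac|ca] := orP (lexlt_total nac);
have [ae|ea] := orP (lexlt_total nae);
have [bc|cb] := orP (lexlt_total nbc);
have [be|eb] := orP (lexlt_total nbe);
have [ce|ec] := orP (lexlt_total nce);
first [ nocyc | (apply: (@core p alpha r hp hrp hal a b c e); solve [assumption | eqs]) | (apply: (@core p alpha r hp hrp hal a b e c); solve [assumption | eqs]) | (apply: (@core p alpha r hp hrp hal a c b e); solve [assumption | eqs]) | (apply: (@core p alpha r hp hrp hal a c e b); solve [assumption | eqs]) | (apply: (@core p alpha r hp hrp hal a e b c); solve [assumption | eqs]) | (apply: (@core p alpha r hp hrp hal a e c b); solve [assumption | eqs]) | (apply: (@core p alpha r hp hrp hal b a c e); solve [assumption | eqs]) | (apply: (@core p alpha r hp hrp hal b a e c); solve [assumption | eqs]) | (apply: (@core p alpha r hp hrp hal b c a e); solve [assumption | eqs]) | (apply: (@core p alpha r hp hrp hal b c e a); solve [assumption | eqs]) | (apply: (@core p alpha r hp hrp hal b e a c); solve [assumption | eqs]) | (apply: (@core p alpha r hp hrp hal b e c a); solve [assumption | eqs]) | (apply: (@core p alpha r hp hrp hal c a b e); solve [assumption | eqs]) | (apply: (@core p alpha r hp hrp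 hal c a e b); solve [assumption | eqs]) | (apply: (@core p alpha r hp hrp hal c b a e); solve [assumption | eqs]) | (apply: (@core p alpha r hp hrp hal c b e a); solve [assumption | eqs]) | (apply: (@core p alpha r hp hrp hal c e a b); solve [assumption | eqs]) | (apply: (@core p alpha r hp hrp hal c e b a); solve [assumption | eqs]) | (apply: (@core p alpha r hp hrp hal e a b c); solve [assumption | eqs]) | (apply: (@core p alpha r hp hrp hal e a c b); solve [assumption | eqs]) | (apply: (@core p alpha r hp hrp hal e b a c); solve [assumption | eqs]) | (apply: (@core p alpha r hp hrp hal e b c a); solve [assumption | eqs]) | (apply: (@core p alpha r hp hrp hal e c a b); solve [assumption | eqs]) | (apply: (@core p alpha r hp hrp hal e c b a); solve [assumption | eqs]) ].
Qed.
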